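(* Fix an angle $0<\theta\le\pi/8$ and, for an angle $\alpha$, let $\phi_\alpha=\cos(\alpha)|0\rangle+\sin(\alpha)|1\rangle$. Define $\phi_{0,0}=\phi_{-\theta}$, $\phi_{0,1}=\phi_{\theta}$, $\phi_{1,0}=\phi_{\pi/2-\theta}$, $\phi_{1,1}=\phi_{\pi/2+\theta}$. Consider the bit escrow protocol with the return challenge: an honest Alice picks her bit $b$ and a uniformly random $x\in\{0,1\}$ and sends the qubit $\phi_{b,x}$ to Bob; later Bob is asked to return the deposited qubit, returns some qubit $q$, and Alice measures $q$ in the basis $\{\phi_{0,x},\phi_{1,x}\}$, setting $r_A=err$ (rejecting) unless the outcome is $\phi_{b,x}$. Then this protocol is $\left(\epsilon=O\!\left(\frac{\sqrt{p}}{\sin(2\theta)}\right),\,p\right)$ sealing, i.e., there is an absolute constant $C$ such that for every $p\in[0,1]$ the protocol is $\left(C\sqrt{p}/\sin(2\theta),\,p\right)$ sealing.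
   Context: A bit escrow protocol is $(\epsilon,p)$ sealing if, whenever Alice is honest and deposits a bit $b$ with $\Pr(b=0)=1/2$, for any (arbitrary quantum) strategy Bob uses and any value $c$ Bob learns (computed from the system Bob retains), either $\Pr(c=b)\le\frac12+\epsilon$ or $\Pr(r_A=err)\ge p$, where the probabilities are over $b$ uniform in $\{0,1\}$ and the protocol. Bob's general strategy: he may apply any unitary to the received qubit together with an ancilla, then returns a qubit to Alice and keeps the rest. *)

(* Defs.v *)
From HB Require Import structures.
From mathcomp Require Import all_boot all_order all_algebra.
From mathcomp Require Import complex mxtens.
From mathcomp Require Import reals trigo.
Set Implicit Arguments. Unset Strict Implicit. Unset Printing Implicit Defensive.
Import Order.TTheory GRing.Theory Num.Theory.
Local Open Scope ring_scope.
Local Open Scope complex_scope.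

Section Escrow.
Variable R : realType.
Local Notation C := R[i].

Definition adjmx m n (A : 'M[C]_(m, n)) : 'M[C]_(n, m) := (map_mx conjc A)^T.

Definition expect n k (M : 'M[C]_n) (v : 'M[C]_(n, k)) : C := \tr (adjmx v *m M *m v).

Definition unitary n (U : 'M[C]_n) := adjmx U *m U = 1%:M.

Definition psd n (M : 'M[C]_n) := forall v : 'cV[C]_n, 0 <= expect M v.

(* a two-outcome POVM (Bob's guess c in {0,1} = bool) on his retained system *)
Definition povm n (E : bool -> 'M[C]_n) :=
  psd (E false) /\ psd (E true) /\ E false + E true = 1%:M.

Definition phi (a : R) : 'cV[C]_2 :=
  \col_(k < 2) (if k == 0 :> nat then (cos a)%:C else (sin a)%:C).

(* phi_{b,x}; bits encoded as bool (false = 0, true = 1) *)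
Definition phibx (th : R) (b x : bool) : 'cV[C]_2 :=
  match b, x with
  | false, false => phi (- th)
  | false, true  => phi th
  | true,  false => phi (pi / 2 - th)
  | true,  true  => phi (pi / 2 + th)
  end.

(* Bob's general strategy: ancilla of dimension d in initial pure state psi0,
   unitary U on (received qubit) (x) (ancilla); the first tensor factor (the qubit)
   is returned to Alice, the ancilla C^d is kept; Bob's guess c is the outcome
   of a POVM E on the retained system. *)
Definition joint_state th d (psi0 : 'cV[C]_d) (U : 'M[C]_(2 * d)) (b x : bool) :=
  U *m (phibx th b x *t psi0).

(* Pr(c = b), b and x uniform *)
Definition prob_guess th d psi0 U (E : bool -> 'M[C]_d) : R :=
  complex.Re (\sum_(b : bool) \sum_(x : bool)
    (1 / 4) * expect (1%:M *t E b) (@joint_state th d psi0 U b x)).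

(* Pr(r_A = err): Alice measures the returned qubit in {phi_{0,x}, phi_{1,x}}
   and rejects unless the outcome is phi_{b,x} *)
Definition prob_err th d psi0 U : R :=
  1 - complex.Re (\sum_(b : bool) \sum_(x : bool)
    (1 / 4) * expect ((phibx th b x *m adjmx (phibx th b x)) *t (1%:M : 'M[C]_d))
                     (@joint_state th d psi0 U b x)).

Definition sealing (th eps p : R) :=
  forall (d : nat) (psi0 : 'cV[C]_d) (U : 'M[C]_(2 * d)) (E : bool -> 'M[C]_d),
    expect 1%:M psi0 = 1 -> unitary U -> povm E ->
    prob_guess th psi0 U E <= 1 / 2 + eps \/ p <= prob_err th psi0 U.

End Escrow.

(* Main.v *)
Require Import Defs.
From HB Require Import structures.
From mathcomp Require Import all_boot all_order all_algebra.
From mathcomp Require Import complex mxtens.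
From mathcomp Require Import reals trigo.
From mathcomp Require Import ring lra.
Import Order.TTheory GRing.Theory Num.Theory.
Set Implicit Arguments. Unset Strict Implicit. Unset Printing Implicit Defensive.
Local Open Scope ring_scope.

Section Aux.
Variable R : realType.
Local Open Scope complex_scope.
Local Notation C := R[i].

Definition form n (M : 'M[C]_n) (x y : 'cV[C]_n) : C := \tr (adjmx x *m M *m y).
Definition Q n (M : 'M[C]_n) (v : 'cV[C]_n) : R := complex.Re (form M v v).
Definition Sx n (M : 'M[C]_n) (x y : 'cV[C]_n) : R := complex.Re (form M x y + form M y x).

Lemma ReD (x y : C) : complex.Re (x + y) = complex.Re x + complex.Re y.
Proof. by case: x; case: y. Qed.

Lemma ReRM (a : R) (x : C) : complex.Re (a%:C * x) = a * complex.Re x.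
Proof. by case: x => u v /=; rewrite mul0r subr0. Qed.

Lemma conjR (a : R) : conjc (a%:C) = a%:C :> C.
Proof. by rewrite /conjc /= oppr0. Qed.

Lemma adjmxD m n (x y : 'M[C]_(m, n)) : adjmx (x + y) = adjmx x + adjmx y.
Proof. by apply/matrixP => i j; rewrite !mxE rmorphD. Qed.

Lemma adjmxB m n (x y : 'M[C]_(m, n)) : adjmx (x - y) = adjmx x - adjmx y.
Proof. by apply/matrixP => i j; rewrite !mxE rmorphB. Qed.

Lemma adjmxZ m n a (x : 'M[C]_(m, n)) : adjmx (a *: x) = conjc a *: adjmx x.
Proof. by apply/matrixP => i j; rewrite !mxE rmorphM. Qed.

Lemma adjmxM m n p (A : 'M[C]_(m, n)) (B : 'M[C]_(n, p)) :
  adjmx (A *m B) = adjmx B *m adjmx A.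
Proof. by rewrite /adjmx map_mxM trmx_mul. Qed.

Lemma formDl n (M : 'M[C]_n) x y z : form M (x + y) z = form M x z + form M y z.
Proof. by rewrite /form adjmxD !mulmxDl mxtraceD. Qed.
Lemma formDr n (M : 'M[C]_n) x y z : form M z (x + y) = form M z x + form M z y.
Proof. by rewrite /form !mulmxDr mxtraceD. Qed.
Lemma formZl n (M : 'M[C]_n) a x z : form M (a *: x) z = conjc a * form M x z.
Proof. by rewrite /form adjmxZ -!scalemxAl mxtraceZ. Qed.
Lemma formZr n (M : 'M[C]_n) a x z : form M z (a *: x) = a * form M z x.
Proof. by rewrite /form -!scalemxAr mxtraceZ. Qed.
Lemma formBM n (M N : 'M[C]_n) x z : form (M - N) x z = form M x z - form N x z.
Proof. by rewrite /form mulmxBr mulmxBl raddfB. Qed.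

Lemma Qcomb2 n (M : 'M[C]_n) (a b : R) x y :
  Q M (a%:C *: x + b%:C *: y) = a ^+ 2 * Q M x + b ^+ 2 * Q M y + a * b * Sx M x y.
Proof.
rewrite /Q /Sx formDl !formDr !formZl !formZr !conjR.
have -> : a%:C * (a%:C * form M x x) + a%:C * (b%:C * form M x y) +
   (b%:C * (a%:C * form M y x) + b%:C * (b%:C * form M y y)) =
   a%:C * (a%:C * form M x x) + b%:C * (b%:C * form M y y) + a%:C * (b%:C * (form M x y + form M y x)).
  move: (form M x x) (form M x y) (form M y x) (form M y y) (a%:C) (b%:C) => p1 p2 p3 p4 a' b'.
  ring.
rewrite !ReD !ReRM ?ReD.
move: (complex.Re (form M x x)) (complex.Re (form M x y)) (complex.Re (form M y x)) (complex.Re (form M y y)) => p1 p2 p3 p4.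
rewrite !expr2; ring.
Qed.

Lemma QZ n (M : 'M[C]_n) (a : R) x : Q M (a%:C *: x) = a ^+ 2 * Q M x.
Proof.
rewrite /Q formZl formZr conjR.
by rewrite !ReRM expr2 mulrA.
Qed.

Lemma Q_ge0 n (M : 'M[C]_n) v : psd M -> 0 <= Q M v.
Proof. by move=> /(_ v); rewrite lecE => /andP [_]. Qed.

Lemma QB n (M N : 'M[C]_n) v : Q (M - N) v = Q M v - Q N v.
Proof. by rewrite /Q formBM; case: (form M v v); case: (form N v v). Qed.

Lemma scale1C n (x : 'cV[C]_n) : (1 : R)%:C *: x = x.
Proof. exact: scale1r. Qed.

Lemma Qadd_le n (M : 'M[C]_n) x y : psd M -> Q M (x + y) <= 2 * Q M x + 2 * Q M y.
Proof.
move=> hM.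
have h1 := Qcomb2 M 1 1 x y. have h2 := Qcomb2 M 1 (-1) x y.
rewrite !scale1C in h1 h2.
have h3 := Q_ge0 (x + (-1)%:C *: y) hM.
move: h1 h2 h3.
move: (Q M (x + y)) (Q M (x + (-1)%:C *: y)) (Q M x) (Q M y) (Sx M x y) => q1 q2 u v w.
move=> -> -> ?. lra.
Qed.

Lemma Qsub_le n (M : 'M[C]_n) x y : psd M -> Q M (x - y) <= 2 * Q M x + 2 * Q M y.
Proof.
move=> hM.
have -> : x - y = x + (-1)%:C *: y by rewrite rmorphN scaleN1r.
apply: (le_trans (Qadd_le _ _ hM)). rewrite QZ.
move: (Q M x) (Q M y) => u w. lra.
Qed.

End Aux.

Section Aux2.
Variable R : realType.
Local Open Scope complex_scope.
Local Notation C := R[i].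

Lemma formE n (M : 'M[C]_n) x y :
  form M x y = \sum_i \sum_k conjc (x i 0) * M i k * y k 0.
Proof.
rewrite /form /mxtrace big_ord1 mxE.
under eq_bigr => k _ do rewrite mxE big_distrl /=.
rewrite exchange_big /=; apply: eq_bigr => i _; apply: eq_bigr => k _.
by rewrite !mxE.
Qed.

Lemma sum_tens m n (F : 'I_(m * n) -> C) :
  \sum_(k < m * n) F k = \sum_(j < m) \sum_(i < n) F (mxtens_index (j, i)).
Proof.
rewrite pair_bigA /=.
rewrite (reindex (@mxtens_unindex m n)) /=; last first.
  by exists (@mxtens_index m n) => k _; [exact: mxtens_unindexK | exact: mxtens_indexK].
by apply: eq_bigr => k _; rewrite mxtens_unindexK.
Qed.

Definition comp d (w : 'cV[C]_(2 * d)) (j : 'I_2) : 'cV[C]_d :=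
  \col_i w (mxtens_index (j, i)) 0.

Lemma formT d (A : 'M[C]_2) (B : 'M[C]_d) (w : 'cV[C]_(2 * d)) :
  form (A *t B) w w = \sum_j \sum_l A j l * form B (comp w j) (comp w l).
Proof.
rewrite formE sum_tens.
apply: eq_bigr => j _.
under eq_bigr => a _ do rewrite sum_tens.
rewrite exchange_big /=; apply: eq_bigr => l _.
rewrite formE mulr_sumr; apply: eq_bigr => a _.
rewrite mulr_sumr; apply: eq_bigr => b _.
by rewrite tensmxE !mxE; ring.
Qed.

Lemma tens11 m n : (1%:M : 'M[C]_m) *t (1%:M : 'M[C]_n) = 1%:M.
Proof.
apply/matrixP => i j.
case: (mxtens_indexP i) => a b; case: (mxtens_indexP j) => c e.
rewrite tensmxE !mxE (can_eq (@mxtens_indexK m n)) xpair_eqE.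
by case: (a == c); case: (b == e); rewrite ?mulr1 ?mulr0 ?mul0r.
Qed.

Lemma compD d (x y : 'cV[C]_(2 * d)) j : comp (x + y) j = comp x j + comp y j.
Proof. by apply/matrixP => i k; rewrite !mxE. Qed.

Lemma compZ d a (x : 'cV[C]_(2 * d)) j : comp (a *: x) j = a *: comp x j.
Proof. by apply/matrixP => i k; rewrite !mxE. Qed.

Lemma comp_tens d (x : 'cV[C]_2) (y : 'cV[C]_d) j :
  comp (x *t y) j = x j 0 *: y.
Proof.
apply/matrixP => i k; rewrite !mxE mxtens_indexK /=.
rewrite [k]ord1; congr (x j _ * y i _); exact: val_inj.
Qed.

Lemma sum_ord2 (F : 'I_2 -> C) : \sum_(j < 2) F j = F 0 + F 1.
Proof. rewrite big_ord_recl big_ord1; congr (_ + F _); exact: val_inj. Qed.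

Lemma expect1T d (E : 'M[C]_d) (w : 'cV[C]_(2 * d)) :
  expect (1%:M *t E) w = form E (comp w 0) (comp w 0) + form E (comp w 1) (comp w 1).
Proof.
rewrite /expect -/(form _ w w) formT !sum_ord2 !mxE /=.
rewrite !mul1r !mul0r !addr0 !add0r //.
Qed.

End Aux2.

Section Aux3.
Variable R : realType.
Local Open Scope complex_scope.
Local Notation C := R[i].

Lemma cosBpi (x : R) : cos (pi / 2 - x) = sin x.
Proof. by rewrite cosB cos_pihalf sin_pihalf mul0r add0r mul1r. Qed.
Lemma sinBpi (x : R) : sin (pi / 2 - x) = cos x.
Proof. by rewrite sinB cos_pihalf sin_pihalf mul0r subr0 mul1r. Qed.
Lemma cosDpi (x : R) : cos (pi / 2 + x) = - sin x.
Proof. by rewrite cosD cos_pihalf sin_pihalf mul0r sub0r mul1r. Qed.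
Lemma sinDpi (x : R) : sin (pi / 2 + x) = cos x.
Proof. by rewrite sinD cos_pihalf sin_pihalf mul0r addr0 mul1r. Qed.

Lemma phi_dec (a : R) :
  phi a = (cos a)%:C *: phi 0 + (sin a)%:C *: phi (pi / 2) :> 'cV[C]_2.
Proof.
apply/matrixP => i k; rewrite !mxE.
case: i => [[|[|i]] hi] //=.
  by rewrite cos0 cos_pihalf rmorph1 rmorph0 mulr1 mulr0 addr0.
by rewrite sin0 sin_pihalf rmorph1 rmorph0 mulr1 mulr0 add0r. Qed.

Lemma tensDl m n p q (x y : 'M[C]_(m, n)) (z : 'M[C]_(p, q)) :
  (x + y) *t z = x *t z + y *t z.
Proof. by apply/matrixP => i j; rewrite !mxE mulrDl. Qed.

Lemma tensZl m n p q a (x : 'M[C]_(m, n)) (z : 'M[C]_(p, q)) :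
  (a *: x) *t z = a *: (x *t z).
Proof. by apply/matrixP => i j; rewrite !mxE mulrA. Qed.

Lemma phi0E (a : R) : (phi a : 'cV[C]_2) 0 0 = (cos a)%:C.
Proof. by rewrite mxE. Qed.
Lemma phi1E (a : R) : (phi a : 'cV[C]_2) 1 0 = (sin a)%:C.
Proof. by rewrite mxE. Qed.

Definition Ak d (U : 'M[C]_(2 * d)) (psi0 : 'cV[C]_d) (k : bool) : 'cV[C]_(2 * d) :=
  U *m (phi (if k then pi / 2 else 0) *t psi0).

Lemma comp_js d (U : 'M[C]_(2 * d)) (psi0 : 'cV[C]_d) (a : R) j :
  comp (U *m (phi a *t psi0)) j =
  (cos a)%:C *: comp (Ak U psi0 false) j + (sin a)%:C *: comp (Ak U psi0 true) j.
Proof.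
by rewrite {1}phi_dec tensDl !tensZl mulmxDr -!scalemxAr compD !compZ.
Qed.

Lemma unit_norm d (U : 'M[C]_(2 * d)) (v : 'cV[C]_(2 * d)) :
  unitary U -> expect 1%:M (U *m v) = expect 1%:M v.
Proof.
move=> hU; rewrite /expect adjmxM !mulmx1 mulmxA -(mulmxA (adjmx v)) hU.
by rewrite mulmx1.
Qed.

Lemma ReexpT d (E : 'M[C]_d) (w : 'cV[C]_(2 * d)) :
  complex.Re (expect (1%:M *t E) w) = Q E (comp w 0) + Q E (comp w 1).
Proof. by rewrite expect1T ReD. Qed.

Lemma norm_phi d (U : 'M[C]_(2 * d)) (psi0 : 'cV[C]_d) (a : R) :
  unitary U -> expect 1%:M psi0 = 1 ->
  Q 1%:M (comp (U *m (phi a *t psi0)) 0) + Q 1%:M (comp (U *m (phi a *t psi0)) 1) = 1.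
Proof.
move=> hU hpsi.
have h := unit_norm (phi a *t psi0) hU.
rewrite -(@tens11 R 2 d) in h.
have := congr1 (@complex.Re R) h; rewrite !ReexpT => ->.
rewrite !comp_tens /Q !formZl !formZr phi0E phi1E !conjR !ReRM.
have -> : complex.Re (form 1%:M psi0 psi0) = 1 by rewrite -[form _ _ _]/(expect 1%:M psi0) hpsi.
by rewrite !mulr1 -!expr2 cos2Dsin2.
Qed.

End Aux3.

Section Aux4.
Variable R : realType.
Local Open Scope complex_scope.
Local Notation C := R[i].

Lemma quarter (z : C) : complex.Re ((1 / 4 : C) * z) = 1 / 4 * complex.Re z.
Proof.
have -> : (1 / 4 : C) = (1 / 4 : R)%:C by rewrite [RHS]rmorphM rmorph1 fmorphV rmorph_nat.
by rewrite ReRM.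
Qed.

Lemma ReSum (I : finType) (F : I -> C) : complex.Re (\sum_i F i) = \sum_i complex.Re (F i).
Proof. exact: (big_morph _ (@ReD R) (erefl _)). Qed.

Lemma sum_expand (F : bool -> bool -> R) :
  \sum_b \sum_x F b x = F true true + F true false + (F false true + F false false).
Proof. by rewrite !big_bool. Qed.

Lemma guess_abs d (J : bool -> bool -> 'cV[C]_(2 * d)) (E : bool -> 'M[C]_d) :
 complex.Re (\sum_b \sum_x (1 / 4) * expect (1%:M *t E b) (J b x)) = 1 / 4 * \sum_b \sum_x
   (Q (E b) (comp (J b x) 0) + Q (E b) (comp (J b x) 1)).
Proof.
rewrite ReSum mulr_sumr; apply: eq_bigr => b _.
rewrite ReSum mulr_sumr; apply: eq_bigr => x _.
by rewrite quarter ReexpT.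
Qed.

Lemma js_ff d th (psi0 : 'cV[C]_d) U j : comp (joint_state th psi0 U false false) j =
  (cos th)%:C *: comp (Ak U psi0 false) j + (- sin th)%:C *: comp (Ak U psi0 true) j.
Proof. by rewrite /joint_state /phibx comp_js cosN sinN. Qed.
Lemma js_ft d th (psi0 : 'cV[C]_d) U j : comp (joint_state th psi0 U false true) j =
  (cos th)%:C *: comp (Ak U psi0 false) j + (sin th)%:C *: comp (Ak U psi0 true) j.
Proof. by rewrite /joint_state /phibx comp_js. Qed.
Lemma js_tf d th (psi0 : 'cV[C]_d) U j : comp (joint_state th psi0 U true false) j =
  (sin th)%:C *: comp (Ak U psi0 false) j + (cos th)%:C *: comp (Ak U psi0 true) j.
Proof. by rewrite /joint_state /phibx comp_js cosBpi sinBpi. Qed.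
Lemma js_tt d th (psi0 : 'cV[C]_d) U j : comp (joint_state th psi0 U true true) j =
  (- sin th)%:C *: comp (Ak U psi0 false) j + (cos th)%:C *: comp (Ak U psi0 true) j.
Proof. by rewrite /joint_state /phibx comp_js cosDpi sinDpi. Qed.

Lemma guess_val d th (psi0 : 'cV[C]_d) U E : povm E -> unitary U -> expect 1%:M psi0 = 1 ->
 prob_guess th psi0 U E = 1/2 + 1/2 * (cos th ^+ 2 - sin th ^+ 2) *
   (Q (E false) (comp (Ak U psi0 false) 0) + Q (E false) (comp (Ak U psi0 false) 1)
    - Q (E false) (comp (Ak U psi0 true) 0) - Q (E false) (comp (Ak U psi0 true) 1)).
Proof.
move=> [_ [_ hE]] hU hpsi.
have hE1 : E true = 1%:M - E false by rewrite -hE addrAC subrr add0r.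
have n0 : Q 1%:M (comp (Ak U psi0 false) 0) + Q 1%:M (comp (Ak U psi0 false) 1) = 1
  := norm_phi 0 hU hpsi.
have n1 : Q 1%:M (comp (Ak U psi0 true) 0) + Q 1%:M (comp (Ak U psi0 true) 1) = 1
  := norm_phi (pi / 2) hU hpsi.
have hff := js_ff th psi0 U. have hft := js_ft th psi0 U.
have htf := js_tf th psi0 U. have htt := js_tt th psi0 U.
rewrite /prob_guess.
move: hff hft htf htt; move: (joint_state th psi0 U) => J hff hft htf htt.
move: n0 n1 hff hft htf htt; move: (Ak U psi0 false) (Ak U psi0 true) => A0 A1 n0 n1 hff hft htf htt.
rewrite guess_abs sum_expand.
rewrite !hff !hft !htf !htt.
have QE1 : forall v, Q (E true) v = Q 1%:M v - Q (E false) v by move=> v; rewrite hE1 QB.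
move: n0 n1; move: (comp A0 0) (comp A0 1) (comp A1 0) (comp A1 1) => a00 a10 a01 a11 n0 n1.
rewrite !Qcomb2.
rewrite !QE1.
move: n0 n1; move: (Q 1%:M a00) (Q 1%:M a10) (Q 1%:M a01) (Q 1%:M a11) => g00 g10 g01 g11 n0 n1.
move: (Q (E false) a00) (Q (E false) a10) (Q (E false) a01) (Q (E false) a11) => f00 f10 f01 f11.
move: (Sx (E true) a00 a01) (Sx (E true) a10 a11) (Sx (E false) a00 a01) (Sx (E false) a10 a11) => s0 s1 s2 s3.
have hcs := cos2Dsin2 th.
move: hcs; move: (cos th) (sin th) => c s hcs.
have e1 : g10 = 1 - g00 by rewrite -n0 addrAC subrr add0r.
have e2 : g11 = 1 - g01 by rewrite -n1 addrAC subrr add0r.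
rewrite e1 e2; apply/eqP; rewrite -subr_eq0; apply/eqP.
transitivity (1/2 * ((c ^+ 2 + s ^+ 2) - 1)); [by field | by rewrite hcs subrr mulr0].
Qed.

End Aux4.

Lemma final_real (R : rcfType) (c2 s2 p err gd g10 f00 f10 f01 f11 : R) :
 0 <= c2 -> c2 <= 1 -> 0 < s2 -> s2 <= 1 -> 0 <= err -> err < p -> p <= 1 ->
 s2 ^+ 2 * gd <= 8 * err -> g10 <= 8 * err -> f10 <= g10 -> 0 <= f01 ->
 f00 <= 1 -> 0 <= f11 -> 0 <= gd ->
 (forall t, 0 < t -> t * (f00 - f11) <= t ^+ 2 + (1 + t) * gd) ->
 1/2 + 1/2 * c2 * (f00 + f10 - f01 - f11) <= 1/2 + 13 * Num.sqrt p / s2.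
Proof.
move=> hc0 hc1 hs0 hs1 he0 hep hp1 hgd hg10 hf10 hf01 hf00 hf11 hgd0 ht.
have hp0 : 0 < p by lra.
set r := Num.sqrt p.
have hr0 : 0 < r by rewrite sqrtr_gt0.
have hr2 : r ^+ 2 = p by rewrite sqr_sqrtr // ltW.
have hr1 : r <= 1 by nra.
set q := r / s2.
have hq0 : 0 < q by rewrite divr_gt0.
have hqs : q * s2 = r by rewrite /q divfK // gt_eqF.
have hrq : r <= q by nra.
have hgdq : gd <= 8 * q ^+ 2.
  have h1 : s2 ^+ 2 * gd <= s2 ^+ 2 * (8 * q ^+ 2) by nra.
  by rewrite ler_pM2l ?exprn_gt0 in h1.
have hg10q : g10 <= 8 * q by nra.
have hfq : f00 - f11 <= 17 * q.
  have [hq1|hq1] := lerP q 1.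
    have h := ht q hq0.
    have h2 : q * (f00 - f11) <= q * (17 * q) by nra.
    by rewrite ler_pM2l in h2.
  lra.
have hD : f00 + f10 - f01 - f11 <= 25 * q by lra.
have hcD : c2 * (f00 + f10 - f01 - f11) <= 25 * q.
  have [hD0|hD0] := lerP 0 (f00 + f10 - f01 - f11); nra.
have -> : 13 * r / s2 = 13 * q by rewrite /q mulrA.
lra.
Qed.

Lemma tineq_real (R : rcfType) (t f00 f11 fd S gd : R) :
  0 < t -> f11 <= 1 ->
  f00 = 1 ^+ 2 * f11 + 1 ^+ 2 * fd + 1 * 1 * S ->
  0 <= t ^+ 2 * f11 + (-1) ^+ 2 * fd + t * -1 * S ->
  0 <= gd - fd ->
  t * (f00 - f11) <= t ^+ 2 + (1 + t) * gd.
Proof.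
move=> ht hf11 -> h3 h4.
rewrite expr1n !mul1r in h3 *. rewrite sqrrN expr1n mul1r mulrN1 in h3.
have e : t * (f11 + fd + S - f11) = t * fd + t * S by ring.
rewrite e.
have h7 : t ^+ 2 * f11 <= t ^+ 2 by rewrite ler_piMr ?sqr_ge0.
have h8 : (1 + t) * fd <= (1 + t) * gd by rewrite ler_wpM2l; lra.
have e2 : (1 + t) * fd = fd + t * fd by ring.
lra.
Qed.

Lemma core_real (R : rcfType) (c s p u1 u2 u3 u4 X Y gd g00 g10 g01 g11 f00 f10 f01 f11 : R) :
 c ^+ 2 + s ^+ 2 = 1 -> 0 < 2 * c * s -> 2 * c * s <= 1 ->
 0 <= c ^+ 2 - s ^+ 2 -> c ^+ 2 - s ^+ 2 <= 1 -> 1/2 <= (c ^+ 2 - s ^+ 2) ^+ 2 ->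
 g00 + g10 = 1 -> g01 + g11 = 1 -> p <= 1 ->
 1/4 * (u1 + u2 + u3 + u4) < p ->
 (2 * c * s) ^+ 2 * gd <= 2 * u1 + 2 * u2 ->
 (c ^+ 4 - s ^+ 4) ^+ 2 * g10 <= 2 * ((c ^+ 2 / 2) ^+ 2 * X) + 2 * ((s ^+ 2 / 2) ^+ 2 * Y) ->
 X <= 2 * u1 + 2 * u2 -> Y <= 2 * u3 + 2 * u4 ->
 0 <= u1 -> 0 <= u2 -> 0 <= u3 -> 0 <= u4 -> 0 <= gd -> 0 <= g10 -> 0 <= g01 ->
 0 <= f01 -> 0 <= g10 - f10 -> 0 <= g00 - f00 -> 0 <= g11 - f11 -> 0 <= f11 ->
 (forall t, 0 < t -> f11 <= 1 -> t * (f00 - f11) <= t ^+ 2 + (1 + t) * gd) ->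
 1/2 + 1/2 * (c ^+ 2 - s ^+ 2) * (f00 + f10 - f01 - f11) <= 1/2 + 13 * Num.sqrt p / (2 * c * s).
Proof.
move=> hcs hs0 hs1 hc0 hc1 hc2 n0 n1 hp1 herr hB1 hB2 hX hY hu1 hu2 hu3 hu4 hgd hg10 hg01
  hf01 hd10 hd00 hd11 hf11 ht.
set err := 1/4 * (u1 + u2 + u3 + u4).
have he0 : 0 <= err by rewrite /err; lra.
have hc4 : c ^+ 4 - s ^+ 4 = c ^+ 2 - s ^+ 2.
  have -> : c ^+ 4 - s ^+ 4 = (c ^+ 2 - s ^+ 2) * (c ^+ 2 + s ^+ 2) by ring.
  by rewrite hcs mulr1.
rewrite hc4 in hB2.
have hc0' : 0 <= c ^+ 2 by rewrite sqr_ge0.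
have hs0' : 0 <= s ^+ 2 by rewrite sqr_ge0.
have hcc : c ^+ 2 <= 1 by lra.
have hss : s ^+ 2 <= 1 by lra.
have hB2' : (c ^+ 2 - s ^+ 2) ^+ 2 * g10 <= 4 * err.
  apply: (le_trans hB2); rewrite /err.
  have e1 : (c ^+ 2 / 2) ^+ 2 = (c ^+ 2) ^+ 2 / 4 by field.
  have e2 : (s ^+ 2 / 2) ^+ 2 = (s ^+ 2) ^+ 2 / 4 by field.
  rewrite e1 e2.
  move: (c ^+ 2) (s ^+ 2) hc0' hs0' hcc hss => C2 S2 hC0 hS0 hC1 hS1.
  have hC4 : C2 ^+ 2 <= 1 by rewrite expr2; nra.
  have hS4 : S2 ^+ 2 <= 1 by rewrite expr2; nra.
  have hC5 : 0 <= C2 ^+ 2 by rewrite sqr_ge0.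
  have hS5 : 0 <= S2 ^+ 2 by rewrite sqr_ge0.
  have k1 : C2 ^+ 2 / 4 * X <= 1 / 4 * (2 * u1 + 2 * u2).
    have : C2 ^+ 2 / 4 * X <= C2 ^+ 2 / 4 * (2 * u1 + 2 * u2) by rewrite ler_wpM2l // divr_ge0.
    move=> h; apply: (le_trans h); rewrite ler_wpM2r //; lra.
  have k2 : S2 ^+ 2 / 4 * Y <= 1 / 4 * (2 * u3 + 2 * u4).
    have : S2 ^+ 2 / 4 * Y <= S2 ^+ 2 / 4 * (2 * u3 + 2 * u4) by rewrite ler_wpM2l // divr_ge0.
    move=> h; apply: (le_trans h); rewrite ler_wpM2r //; lra.
  lra.
have hg10e : g10 <= 8 * err.
  have : (c ^+ 2 - s ^+ 2) ^+ 2 * g10 >= 1/2 * g10 by rewrite ler_wpM2r.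
  lra.
have hB1' : (2 * c * s) ^+ 2 * gd <= 8 * err by rewrite /err; lra.
apply: (final_real hc0 hc1 hs0 hs1 he0 herr hp1 hB1' hg10e) => //.
- lra.
- lra.
- move=> t t0; apply: ht => //; lra.
Qed.

Lemma alg4 (R : rcfType) (q1 q2 q3 q4 : R) :
  1 - 1 / 4 * (1 - q4 + (1 - q3) + (1 - q2 + (1 - q1))) = 1 / 4 * (q1 + q2 + q3 + q4).
Proof. by field. Qed.

Section Core.
Variable R : realType.
Local Open Scope complex_scope.
Local Notation C := R[i].

Lemma CN (x : R) : (- x)%:C = - x%:C :> C. Proof. exact: rmorphN. Qed.
Lemma CM (x y : R) : (x * y)%:C = x%:C * y%:C :> C. Proof. exact: rmorphM. Qed.
Lemma CB (x y : R) : (x - y)%:C = x%:C - y%:C :> C. Proof. exact: rmorphB. Qed.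
Lemma CX (x : R) n : (x ^+ n)%:C = x%:C ^+ n :> C. Proof. exact: rmorphXn. Qed.
Lemma CV (x : R) : (x^-1)%:C = (x%:C)^-1 :> C. Proof. exact: fmorphV. Qed.
Lemma C2 : (2 : R)%:C = 2 :> C. Proof. exact: rmorph_nat. Qed.

Definition uvec d (a00 a10 a01 a11 : 'cV[C]_d) (x y : R) : 'cV[C]_d :=
  (- y)%:C *: (x%:C *: a00 + y%:C *: a01) + x%:C *: (x%:C *: a10 + y%:C *: a11).

Definition uvecC d (a00 a10 a01 a11 : 'cV[C]_d) (x y : C) : 'cV[C]_d :=
  (- y) *: (x *: a00 + y *: a01) + x *: (x *: a10 + y *: a11).

Lemma uvecE d (a00 a10 a01 a11 : 'cV[C]_d) (x y : R) :
  uvec a00 a10 a01 a11 x y = uvecC a00 a10 a01 a11 x%:C y%:C.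
Proof. by rewrite /uvec /uvecC CN. Qed.

Lemma V1C d (a00 a10 a01 a11 : 'cV[C]_d) (c s : C) :
  uvecC a00 a10 a01 a11 c (- s) - uvecC a00 a10 a01 a11 c s = (2 * c * s) *: (a00 - a11).
Proof.
apply/matrixP => i k; rewrite !mxE.
move: (a00 i k) (a10 i k) (a01 i k) (a11 i k) => ? ? ? ?; ring.
Qed.

Lemma V2C d (a00 a10 a01 a11 : 'cV[C]_d) (c s : C) :
  (c ^+ 2 / 2) *: (uvecC a00 a10 a01 a11 c (- s) + uvecC a00 a10 a01 a11 c s)
  - (s ^+ 2 / 2) *: (uvecC a00 a10 a01 a11 s c + uvecC a00 a10 a01 a11 (- s) c)
  = (c ^+ 4 - s ^+ 4) *: a10.
Proof.
apply/matrixP => i k; rewrite !mxE.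
move: (a00 i k) (a10 i k) (a01 i k) (a11 i k) => ? ? ? ?; by field.
Qed.

Lemma V1 d (a00 a10 a01 a11 : 'cV[C]_d) (c s : R) :
  uvec a00 a10 a01 a11 c (- s) - uvec a00 a10 a01 a11 c s = (2 * c * s)%:C *: (a00 - a11).
Proof. by rewrite !uvecE CN V1C !CM C2. Qed.

Lemma V2 d (a00 a10 a01 a11 : 'cV[C]_d) (c s : R) :
  (c ^+ 2 / 2)%:C *: (uvec a00 a10 a01 a11 c (- s) + uvec a00 a10 a01 a11 c s)
  - (s ^+ 2 / 2)%:C *: (uvec a00 a10 a01 a11 s c + uvec a00 a10 a01 a11 (- s) c)
  = (c ^+ 4 - s ^+ 4)%:C *: a10.
Proof.
have k1 : (c ^+ 2 / 2)%:C = c%:C ^+ 2 / 2 :> C by rewrite CM CX CV C2.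
have k2 : (s ^+ 2 / 2)%:C = s%:C ^+ 2 / 2 :> C by rewrite CM CX CV C2.
have k3 : (c ^+ 4 - s ^+ 4)%:C = c%:C ^+ 4 - s%:C ^+ 4 :> C by rewrite CB !CX.
by rewrite k1 k2 k3 !uvecE CN V2C.
Qed.

Lemma tineq d (E0 : 'M[C]_d) (a00 a11 : 'cV[C]_d) (t : R) :
  psd E0 -> psd (1%:M - E0) -> 0 < t -> Q E0 a11 <= 1 ->
  t * (Q E0 a00 - Q E0 a11) <= t ^+ 2 + (1 + t) * Q 1%:M (a00 - a11).
Proof.
move=> hE0 hE1 ht hf11.
have e : a00 = (1 : R)%:C *: a11 + (1 : R)%:C *: (a00 - a11) by rewrite !scale1C addrC subrK.
have q1 := Qcomb2 E0 1 1 a11 (a00 - a11). rewrite -e in q1.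
have q2 := Qcomb2 E0 t (-1) a11 (a00 - a11).
have q3 := Q_ge0 (t%:C *: a11 + (-1)%:C *: (a00 - a11)) hE0. rewrite q2 in q3.
have q4 := Q_ge0 (a00 - a11) hE1. rewrite QB in q4.
exact: (tineq_real ht hf11 q1 q3 q4).
Qed.

Lemma core d (E0 : 'M[C]_d) (a00 a10 a01 a11 : 'cV[C]_d) (c s p : R) :
 psd E0 -> psd (1%:M - E0) -> psd (1%:M : 'M[C]_d) ->
 c ^+ 2 + s ^+ 2 = 1 -> 0 < 2 * c * s -> 2 * c * s <= 1 ->
 0 <= c ^+ 2 - s ^+ 2 -> c ^+ 2 - s ^+ 2 <= 1 -> 1/2 <= (c ^+ 2 - s ^+ 2) ^+ 2 ->
 Q 1%:M a00 + Q 1%:M a10 = 1 -> Q 1%:M a01 + Q 1%:M a11 = 1 -> p <= 1 ->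
 1/4 * (Q 1%:M (uvec a00 a10 a01 a11 c (- s)) + Q 1%:M (uvec a00 a10 a01 a11 c s)
      + Q 1%:M (uvec a00 a10 a01 a11 s c) + Q 1%:M (uvec a00 a10 a01 a11 (- s) c)) < p ->
 1/2 + 1/2 * (c ^+ 2 - s ^+ 2) * (Q E0 a00 + Q E0 a10 - Q E0 a01 - Q E0 a11)
   <= 1/2 + 13 * Num.sqrt p / (2 * c * s).
Proof.
move=> hE0 hE1 h1 hcs hs0 hs1 hc0 hc1 hc2 n0 n1 hp1 herr.
have v1 := V1 a00 a10 a01 a11 c s.
have v2 := V2 a00 a10 a01 a11 c s.
have hB1 : (2 * c * s) ^+ 2 * Q 1%:M (a00 - a11) <=
   2 * Q 1%:M (uvec a00 a10 a01 a11 c (- s)) + 2 * Q 1%:M (uvec a00 a10 a01 a11 c s).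
  by rewrite -QZ -v1; exact: Qsub_le.
have hB2 : (c ^+ 4 - s ^+ 4) ^+ 2 * Q 1%:M a10 <=
   2 * ((c ^+ 2 / 2) ^+ 2 * Q 1%:M (uvec a00 a10 a01 a11 c (- s) + uvec a00 a10 a01 a11 c s))
 + 2 * ((s ^+ 2 / 2) ^+ 2 * Q 1%:M (uvec a00 a10 a01 a11 s c + uvec a00 a10 a01 a11 (- s) c)).
  by rewrite -QZ -v2 -!QZ; exact: Qsub_le.
have hA1 := Qadd_le (uvec a00 a10 a01 a11 c (- s)) (uvec a00 a10 a01 a11 c s) h1.
have hA2 := Qadd_le (uvec a00 a10 a01 a11 s c) (uvec a00 a10 a01 a11 (- s) c) h1.
have hd10 := Q_ge0 a10 hE1. rewrite QB in hd10.
have hd00 := Q_ge0 a00 hE1. rewrite QB in hd00.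
have hd11 := Q_ge0 a11 hE1. rewrite QB in hd11.
apply: (core_real hcs hs0 hs1 hc0 hc1 hc2 n0 n1 hp1 herr hB1 hB2 hA1 hA2
   (Q_ge0 _ h1) (Q_ge0 _ h1) (Q_ge0 _ h1) (Q_ge0 _ h1) (Q_ge0 _ h1) (Q_ge0 _ h1) (Q_ge0 _ h1)
   (Q_ge0 _ hE0) hd10 hd00 hd11 (Q_ge0 _ hE0)).
move=> t t0 hf; exact: tineq.
Qed.

End Core.

Section Err.
Variable R : realType.
Local Open Scope complex_scope.
Local Notation C := R[i].

Lemma Pentry (a : R) (j l : 'I_2) :
  (phi a *m adjmx (phi a) : 'M[C]_2) j l = (phi a) j 0 * conjc ((phi a) l 0).
Proof. by rewrite !mxE big_ord1 !mxE. Qed.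

Lemma expP d (a : R) (w : 'cV[C]_(2 * d)) :
  complex.Re (expect ((phi a *m adjmx (phi a)) *t 1%:M) w) =
  Q 1%:M ((cos a)%:C *: comp w 0 + (sin a)%:C *: comp w 1).
Proof.
rewrite /expect -/(form _ w w) formT !sum_ord2 !Pentry !phi0E !phi1E !conjR Qcomb2 /Q /Sx.
rewrite -!mulrA !ReD !ReRM ?ReD.
move: (complex.Re (form 1%:M (comp w 0) (comp w 0))) (complex.Re (form 1%:M (comp w 0) (comp w 1)))
  (complex.Re (form 1%:M (comp w 1) (comp w 0))) (complex.Re (form 1%:M (comp w 1) (comp w 1))) => ? ? ? ?.
ring.
Qed.

Lemma err_abs d (P : bool -> bool -> 'cV[C]_2) (J : bool -> bool -> 'cV[C]_(2 * d)) :
  complex.Re (\sum_b \sum_x (1 / 4) * expect ((P b x *m adjmx (P b x)) *t (1%:M : 'M[C]_d)) (J b x))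
  = 1 / 4 * \sum_b \sum_x complex.Re (expect ((P b x *m adjmx (P b x)) *t (1%:M : 'M[C]_d)) (J b x)).
Proof.
rewrite ReSum mulr_sumr; apply: eq_bigr => b _.
rewrite ReSum mulr_sumr; apply: eq_bigr => x _.
by rewrite quarter.
Qed.

Lemma rotQ d (M : 'M[C]_d) (x0 x1 : 'cV[C]_d) (c s : R) :
  Q M (c%:C *: x0 + s%:C *: x1) + Q M ((- s)%:C *: x0 + c%:C *: x1) =
  (c ^+ 2 + s ^+ 2) * (Q M x0 + Q M x1).
Proof.
rewrite !Qcomb2.
move: (Q M x0) (Q M x1) (Sx M x0 x1) => ? ? ?; ring.
Qed.

Lemma term_gen d (x0 x1 a00 a10 a01 a11 : 'cV[C]_d) (c s : R) :
  c ^+ 2 + s ^+ 2 = 1 -> Q 1%:M x0 + Q 1%:M x1 = 1 ->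
  x0 = c%:C *: a00 + s%:C *: a01 -> x1 = c%:C *: a10 + s%:C *: a11 ->
  Q 1%:M (c%:C *: x0 + s%:C *: x1) = 1 - Q 1%:M (uvec a00 a10 a01 a11 c s).
Proof.
move=> hcs hn hx0 hx1.
have -> : uvec a00 a10 a01 a11 c s = (- s)%:C *: x0 + c%:C *: x1 by rewrite /uvec -hx0 -hx1.
have := rotQ 1%:M x0 x1 c s; rewrite hcs hn mulr1.
move: (Q 1%:M (c%:C *: x0 + s%:C *: x1)) (Q 1%:M ((- s)%:C *: x0 + c%:C *: x1)) => ? ? ?; lra.
Qed.

Lemma E_gen d (a c s : R) (w : 'cV[C]_(2 * d)) (a00 a10 a01 a11 : 'cV[C]_d) :
  cos a = c -> sin a = s -> c ^+ 2 + s ^+ 2 = 1 ->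
  Q 1%:M (comp w 0) + Q 1%:M (comp w 1) = 1 ->
  comp w 0 = c%:C *: a00 + s%:C *: a01 -> comp w 1 = c%:C *: a10 + s%:C *: a11 ->
  complex.Re (expect ((phi a *m adjmx (phi a)) *t 1%:M) w) = 1 - Q 1%:M (uvec a00 a10 a01 a11 c s).
Proof. move=> hc hs hcs hn h0 h1; rewrite expP hc hs; exact: term_gen. Qed.

End Err.

Section Err2.
Variable R : realType.
Local Open Scope complex_scope.
Local Notation C := R[i].

Lemma err_val d th (psi0 : 'cV[C]_d) U : unitary U -> expect 1%:M psi0 = 1 ->
 prob_err th psi0 U = 1/4 *
  (Q 1%:M (uvec (comp (Ak U psi0 false) 0) (comp (Ak U psi0 false) 1) (comp (Ak U psi0 true) 0) (comp (Ak U psi0 true) 1) (cos th) (- sin th))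
 + Q 1%:M (uvec (comp (Ak U psi0 false) 0) (comp (Ak U psi0 false) 1) (comp (Ak U psi0 true) 0) (comp (Ak U psi0 true) 1) (cos th) (sin th))
 + Q 1%:M (uvec (comp (Ak U psi0 false) 0) (comp (Ak U psi0 false) 1) (comp (Ak U psi0 true) 0) (comp (Ak U psi0 true) 1) (sin th) (cos th))
 + Q 1%:M (uvec (comp (Ak U psi0 false) 0) (comp (Ak U psi0 false) 1) (comp (Ak U psi0 true) 0) (comp (Ak U psi0 true) 1) (- sin th) (cos th))).
Proof.
move=> hU hpsi.
have nff : Q 1%:M (comp (joint_state th psi0 U false false) 0) + Q 1%:M (comp (joint_state th psi0 U false false) 1) = 1
  := norm_phi (- th) hU hpsi.
have nft : Q 1%:M (comp (joint_state th psi0 U false true) 0) + Q 1%:M (comp (joint_state th psi0 U false true) 1) = 1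
  := norm_phi th hU hpsi.
have ntf : Q 1%:M (comp (joint_state th psi0 U true false) 0) + Q 1%:M (comp (joint_state th psi0 U true false) 1) = 1
  := norm_phi (pi / 2 - th) hU hpsi.
have ntt : Q 1%:M (comp (joint_state th psi0 U true true) 0) + Q 1%:M (comp (joint_state th psi0 U true true) 1) = 1
  := norm_phi (pi / 2 + th) hU hpsi.
have hff := js_ff th psi0 U. have hft := js_ft th psi0 U.
have htf := js_tf th psi0 U. have htt := js_tt th psi0 U.
have hcs := cos2Dsin2 th.
have h1 : cos th ^+ 2 + (- sin th) ^+ 2 = 1 by rewrite sqrrN.
have h2 : sin th ^+ 2 + cos th ^+ 2 = 1 by rewrite addrC.
have h3 : (- sin th) ^+ 2 + cos th ^+ 2 = 1 by rewrite sqrrN addrC.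
have E_ff := E_gen (cosN th) (sinN th) h1 nff (hff 0) (hff 1).
have E_ft := E_gen (erefl (cos th)) (erefl (sin th)) hcs nft (hft 0) (hft 1).
have E_tf := E_gen (cosBpi th) (sinBpi th) h2 ntf (htf 0) (htf 1).
have E_tt := E_gen (cosDpi th) (sinDpi th) h3 ntt (htt 0) (htt 1).
rewrite /prob_err err_abs sum_expand.
have eff : phibx th false false = phi (- th) by [].
have eft : phibx th false true = phi th by [].
have etf : phibx th true false = phi (pi / 2 - th) by [].
have ett : phibx th true true = phi (pi / 2 + th) by [].
rewrite eff eft etf ett.
move: E_ff E_ft E_tf E_tt; move: (joint_state th psi0 U) => J E_ff E_ft E_tf E_tt.
rewrite E_ff E_ft E_tf E_tt.
move: (cos th) (sin th) => c s.
move: (Ak U psi0) => A.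
move: (comp (A false) 0) (comp (A false) 1) (comp (A true) 0) (comp (A true) 1) => a00 a10 a01 a11.
exact: alg4.
Qed.


End Err2.

Section Main.
Variable R : realType.
Local Open Scope complex_scope.
Local Notation C := R[i].

Lemma psd_add n (M N : 'M[C]_n) : psd M -> psd N -> psd (M + N).
Proof.
move=> hM hN v; have := hM v; have := hN v.
rewrite /expect mulmxDr mulmxDl mxtraceD => h1 h2.
exact: addr_ge0.
Qed.

Lemma trig_facts (th : R) : 0 < th -> th <= pi / 8 ->
  [/\ sin (2 * th) = 2 * cos th * sin th, cos (2 * th) = cos th ^+ 2 - sin th ^+ 2,
      0 < sin (2 * th), sin (2 * th) <= 1 &
      [/\ 0 <= cos (2 * th), cos (2 * th) <= 1 & 1/2 <= cos (2 * th) ^+ 2]].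
Proof.
move=> h0 h8.
have hpi := pi_gt0 R.
have e2 : 2 * th = th *+ 2 by rewrite mulr_natl.
have hs : sin (2 * th) = 2 * cos th * sin th by rewrite e2 sin_mulr2n -mulr_natl mulrA.
have hc : cos (2 * th) = cos th ^+ 2 - sin th ^+ 2.
  by rewrite e2 cos_mulr2n sin2cos2 mulr2n; ring.
split => //.
- apply: sin_gt0_pi; apply/andP; split; lra.
- exact: sin_le1.
split.
- apply: cos_ge0_pihalf; apply/andP; split; lra.
- exact: cos_le1.
have e4 : cos ((2 * th) *+ 2) = cos (2 * th) ^+ 2 *+ 2 - 1 by rewrite cos_mulr2n.
have h4 : 0 <= cos ((2 * th) *+ 2).
  apply: cos_ge0_pihalf; rewrite -mulr_natl; apply/andP; split; lra.
rewrite e4 mulr2n in h4.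
move: h4; move: (cos (2 * th) ^+ 2) => x; lra.
Qed.

End Main.

Unset Implicit Arguments.

Theorem theorem10 (R : realType) :
  exists Cst : R, forall th p : R,
    0 < th -> th <= pi / 8 -> 0 <= p -> p <= 1 ->
    sealing th (Cst * Num.sqrt p / sin (2 * th)) p.
Proof.
exists 13 => th p hth hth8 hp0 hp1 d psi0 U E hpsi hU hE.
case: (lerP p (prob_err th psi0 U)) => herr; [by right | left].
have [hE0 [hE1 hEs]] := hE.
have hE1' : psd (1%:M - E false).
  by rewrite -hEs addrAC subrr add0r.
have h1 : psd (1%:M : 'M[R[i]]_d) by rewrite -hEs; exact: psd_add.
have [hs hc hs0 hs1 [hc0 hc1 hc2]] := trig_facts hth hth8.
have n0 := norm_phi 0 hU hpsi.
have n1 := norm_phi (pi / 2) hU hpsi.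
rewrite (guess_val th hE hU hpsi).
rewrite (err_val th hU hpsi) in herr.
rewrite hs.
rewrite hs in hs0 hs1. rewrite hc in hc0 hc1 hc2.
exact: (core hE0 hE1' h1 (cos2Dsin2 th) hs0 hs1 hc0 hc1 hc2 n0 n1 hp1 herr).
Qed.
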